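(* Consider the quadratic finite-horizon dynamic multi-agent system described in the context, with constants $\gamma,\alpha,\beta,\rho>0$ such that $\|\mathbf x_i(0)\|\le\gamma$, $\|\mathbf A_i\|\le\alpha$, $\|\mathbf B_i\|\le\beta$ and $\mathbf H_i\succeq\rho\mathbf I$ for all $i\in\mathcal V$, and assume $C(t)>0$ for all $t\in\mathcal T$. Let $\lambda^\dagger>0$ and let $\delta_{\max}>0$ satisfy, for every $k\in\mathcal T$, $$\delta_{\max}\sum_{t=k+1}^{N}\Big[\gamma\,\alpha^{2t-k-1}+\beta\sum_{\substack{j=0\\ j\neq k}}^{t-1}\sqrt{\tfrac{C(j)}{\rho}}\;\alpha^{2t-j-k-2}\Big]\;\le\;\frac{\sqrt{C(k)\rho}}{n\beta}\,\lambda^\dagger .$$ Then for every choice of symmetric positive definite matrices $\mathbf Q_i,\mathbf R_i$ ($i\in\mathcal V$) with $\|\mathbf Q_i\|\le\delta_{\max}$, every competitive equilibrium $(\boldsymbol\lambda^\ast,\mathbf U^\ast,\mathbf E^\ast)$ satisfies $\lambda^\ast_t\le\lambda^\dagger$ for all $t\in\mathcal T$.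
   Context: Finite-horizon dynamic multi-agent system: $n$ agents $\mathcal V=\{1,\dots,n\}$, horizon $N\ge1$, $\mathcal T=\{0,\dots,N-1\}$. Agent $i$ has state $\mathbf x_i(t)\in\mathbb R^d$, input $\mathbf u_i(t)\in\mathbb R^m$, dynamics $\mathbf x_i(t+1)=\mathbf A_i\mathbf x_i(t)+\mathbf B_i\mathbf u_i(t)$ with given $\mathbf x_i(0)$, excess resource $a_i(t)\in\mathbb R$, and $C(t)=\sum_{i=1}^na_i(t)$. Quadratic case: agent $i$'s parameter is $\theta_i=(\mathbf Q_i,\mathbf R_i)$ with $\mathbf Q_i\in\mathbb R^{d\times d}$, $\mathbf R_i\in\mathbb R^{m\times m}$ symmetric positive definite; running utility $f(\mathbf x,\mathbf u;\theta_i)=-\mathbf x^\top\mathbf Q_i\mathbf x-\mathbf u^\top\mathbf R_i\mathbf u$; terminal utility $\phi(\mathbf x;\theta_i)=-\mathbf x^\top\mathbf Q_i\mathbf x$; consumption $h_i(\mathbf u)=\mathbf u^\top\mathbf H_i\mathbf u$ with $\mathbf H_i$ symmetric positive definite. Norms are Euclidean / induced operator norms. A competitive equilibrium is a triple $(\boldsymbol\lambda^\ast,\mathbf U^\ast,\mathbf E^\ast)$, $\boldsymbol\lambda^\ast=(\lambda^\ast_0,\dots,\lambda^\ast_{N-1})\in\mathbb R^N$, such that (i) for each $i\in\mathcal V$, $(\mathbf U_i^\ast,\mathbf E_i^\ast)=((\mathbf u_i^\ast(t))_{t\in\mathcal T},(e_i^\ast(t))_{t\in\mathcal T})$ is a maximizer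 of $\phi(\mathbf x_i(N);\theta_i)+\sum_{t=0}^{N-1}\big(f(\mathbf x_i(t),\mathbf u_i(t);\theta_i)+\lambda^\ast_t e_i(t)\big)$ over all inputs $\mathbf u_i(t)\in\mathbb R^m$ and trades $e_i(t)\in\mathbb R$ subject to the dynamics and $e_i(t)\le a_i(t)-h_i(\mathbf u_i(t))$ for all $t\in\mathcal T$; and (ii) $\sum_{i=1}^ne_i^\ast(t)=0$ for all $t\in\mathcal T$. *)

(* Defs.v *)
From HB Require Import structures.
From mathcomp Require Import all_boot all_order all_algebra.
From mathcomp Require Import classical_sets boolp reals.
Set Implicit Arguments.
Unset Strict Implicit.
Unset Printing Implicit Defensive.
Import Order.TTheory GRing.Theory Num.Theory.
Local Open Scope ring_scope.
Local Open Scope classical_set_scope.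

Section Defs.
Variable R : realType.

Definition vnorm (k : nat) (x : 'cV[R]_k) : R :=
  Num.sqrt (\sum_(i < k) (x i 0) ^+ 2).

Definition opnorm (p q : nat) (M : 'M[R]_(p, q)) : R :=
  sup [set vnorm (M *m x) | x in [set x : 'cV[R]_q | vnorm x <= 1]].

Definition qf (k : nat) (M : 'M[R]_k) (x : 'cV[R]_k) : R := (x^T *m M *m x) 0 0.

Definition sym_pd (k : nat) (M : 'M[R]_k) : Prop :=
  M^T = M /\ forall x : 'cV[R]_k, x != 0 -> 0 < qf M x.

Definition psd_lb (k : nat) (M : 'M[R]_k) (rho : R) : Prop :=
  forall x : 'cV[R]_k, rho * qf 1%:M x <= qf M x.

Fixpoint traj (d m : nat) (A : 'M[R]_d) (B : 'M[R]_(d, m)) (x0 : 'cV[R]_d)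
  (u : nat -> 'cV[R]_m) (t : nat) : 'cV[R]_d :=
  match t with
  | 0 => x0
  | t'.+1 => A *m traj A B x0 u t' + B *m u t'
  end.

Definition run_util (d m : nat) (Q : 'M[R]_d) (Rm : 'M[R]_m)
  (x : 'cV[R]_d) (u : 'cV[R]_m) : R := - qf Q x - qf Rm u.
Definition term_util (d : nat) (Q : 'M[R]_d) (x : 'cV[R]_d) : R := - qf Q x.

Definition agent_obj (N d m : nat) (A : 'M[R]_d) (B : 'M[R]_(d, m))
  (x0 : 'cV[R]_d) (Q : 'M[R]_d) (Rm : 'M[R]_m) (lam : nat -> R)
  (u : nat -> 'cV[R]_m) (e : nat -> R) : R :=
  term_util Q (traj A B x0 u N) +
  \sum_(0 <= t < N) (run_util Q Rm (traj A B x0 u t) (u t) + lam t * e t).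

Definition feasible (N m : nat) (H : 'M[R]_m) (a : nat -> R)
  (u : nat -> 'cV[R]_m) (e : nat -> R) : Prop :=
  forall t, (t < N)%N -> e t <= a t - qf H (u t).

(* competitive equilibrium (lam, U, E); time-indexed objects are functions on
   nat of which only the values at t in T = {0,..,N-1} matter. *)
Definition competitive_eq (n N d m : nat)
  (A : 'I_n -> 'M[R]_d) (B : 'I_n -> 'M[R]_(d, m)) (x0 : 'I_n -> 'cV[R]_d)
  (Q : 'I_n -> 'M[R]_d) (Rm : 'I_n -> 'M[R]_m) (H : 'I_n -> 'M[R]_m)
  (a : 'I_n -> nat -> R)
  (lam : nat -> R) (U : 'I_n -> nat -> 'cV[R]_m) (E : 'I_n -> nat -> R) : Prop :=
  (forall i : 'I_n,
     feasible N (H i) (a i) (U i) (E i) /\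
     forall (u : nat -> 'cV[R]_m) (e : nat -> R),
       feasible N (H i) (a i) u e ->
       agent_obj N (A i) (B i) (x0 i) (Q i) (Rm i) lam u e <=
       agent_obj N (A i) (B i) (x0 i) (Q i) (Rm i) lam (U i) (E i)) /\
  (forall t, (t < N)%N -> \sum_(i < n) E i t = 0).

End Defs.

(* Main.v *)
Require Import Defs.
From HB Require Import structures.
From mathcomp Require Import all_boot all_order all_algebra.
From mathcomp Require Import classical_sets boolp reals.
From mathcomp Require Import ring lra zify.
Import Order.TTheory GRing.Theory Num.Theory.
Local Open Scope ring_scope.

Set Implicit Arguments. Unset Strict Implicit.

Section Norms.
Variable R : realType.

Lemma CS (k : nat) (f g : 'I_k -> R) :
  (\sum_i f i * g i) ^+ 2 <= (\sum_i f i ^+ 2) * (\sum_i g i ^+ 2).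
Proof.
have E1 : (\sum_i f i ^+ 2) * (\sum_i g i ^+ 2) =
   \sum_i \sum_j (f i ^+ 2 * g j ^+ 2).
  by rewrite mulr_suml; apply: eq_bigr => i _; rewrite mulr_sumr.
have E2 : (\sum_i f i ^+ 2) * (\sum_i g i ^+ 2) =
   \sum_i \sum_j (f j ^+ 2 * g i ^+ 2).
  rewrite mulrC mulr_suml; apply: eq_bigr => i _; rewrite mulr_sumr.
  by apply: eq_bigr => j _; rewrite mulrC.
have E3 : (\sum_i f i * g i) ^+ 2 = \sum_i \sum_j ((f i * g i) * (f j * g j)).
  by rewrite expr2 mulr_suml; apply: eq_bigr => i _; rewrite mulr_sumr.
have P : 0 <= \sum_i \sum_j (f i * g j - f j * g i) ^+ 2.
  by apply: sumr_ge0 => i _; apply: sumr_ge0 => j _; apply: sqr_ge0.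
have E4 : \sum_i \sum_j (f i * g j - f j * g i) ^+ 2 =
  \sum_i \sum_j (f i ^+ 2 * g j ^+ 2) + \sum_i \sum_j (f j ^+ 2 * g i ^+ 2)
  - 2 * \sum_i \sum_j ((f i * g i) * (f j * g j)).
  rewrite mulr_sumr -big_split -sumrB /=; apply: eq_bigr => i _.
  rewrite mulr_sumr -big_split -sumrB /=; apply: eq_bigr => j _.
  ring.
rewrite E4 -E1 -E2 -E3 in P.
lra.
Qed.

Definition dot (k : nat) (x y : 'cV[R]_k) : R := \sum_i x i 0 * y i 0.

Lemma vnormE k (x : 'cV[R]_k) : vnorm x = Num.sqrt (dot x x).
Proof. by rewrite /vnorm /dot; congr Num.sqrt; apply: eq_bigr => i _; rewrite expr2. Qed.

Lemma dot_ge0 k (x : 'cV[R]_k) : 0 <= dot x x.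
Proof. by apply: sumr_ge0 => i _; rewrite -expr2 sqr_ge0. Qed.

Lemma vnorm_ge0 k (x : 'cV[R]_k) : 0 <= vnorm x.
Proof. exact: sqrtr_ge0. Qed.

Lemma vnorm_sq k (x : 'cV[R]_k) : vnorm x ^+ 2 = dot x x.
Proof. by rewrite vnormE sqr_sqrtr // dot_ge0. Qed.

Lemma dotC k (x y : 'cV[R]_k) : dot x y = dot y x.
Proof. by apply: eq_bigr => i _; rewrite mulrC. Qed.

Lemma dotDl k (x y z : 'cV[R]_k) : dot (x + y) z = dot x z + dot y z.
Proof. by rewrite /dot -big_split; apply: eq_bigr => i _; rewrite !mxE mulrDl. Qed.

Lemma dotDr k (x y z : 'cV[R]_k) : dot z (x + y) = dot z x + dot z y.
Proof. by rewrite dotC dotDl !(dotC z). Qed.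

Lemma dotZl k c (x y : 'cV[R]_k) : dot (c *: x) y = c * dot x y.
Proof. by rewrite /dot mulr_sumr; apply: eq_bigr => i _; rewrite !mxE mulrA. Qed.

Lemma dotZr k c (x y : 'cV[R]_k) : dot y (c *: x) = c * dot y x.
Proof. by rewrite dotC dotZl dotC. Qed.

Lemma dotNl k (x y : 'cV[R]_k) : dot (- x) y = - dot x y.
Proof. by rewrite -scaleN1r dotZl mulN1r. Qed.

Lemma dot0l k (y : 'cV[R]_k) : dot 0 y = 0.
Proof. by rewrite /dot big1 // => i _; rewrite mxE mul0r. Qed.

Lemma dot0r k (y : 'cV[R]_k) : dot y 0 = 0.
Proof. by rewrite dotC dot0l. Qed.

Lemma dot_CS k (x y : 'cV[R]_k) : `|dot x y| <= vnorm x * vnorm y.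
Proof.
rewrite !vnormE -sqrtrM ?dot_ge0 // -sqrtr_sqr ler_wsqrtr //.
have := CS (fun i => x i 0) (fun i => y i 0).
by rewrite /dot; congr (_ <= _ * _); apply: eq_bigr => i _; rewrite expr2.
Qed.

Lemma vnormD k (x y : 'cV[R]_k) : vnorm (x + y) <= vnorm x + vnorm y.
Proof.
rewrite (vnormE (x + y)) -(@ger0_norm _ (vnorm x + vnorm y)); last first.
  by rewrite addr_ge0 ?vnorm_ge0.
rewrite -sqrtr_sqr ler_wsqrtr // dotDl !dotDr (dotC y x).
have := dot_CS x y; rewrite -!vnorm_sq.
move: (dot x y) => c; move: (vnorm x) (vnorm y) => p q.
move=> h; have : c <= p * q by apply: le_trans (ler_norm _) h.
move=> h2; nra.
Qed.

Lemma vnormZ k c (x : 'cV[R]_k) : vnorm (c *: x) = `|c| * vnorm x.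
Proof.
by rewrite !vnormE dotZl dotZr mulrA -expr2 sqrtrM ?sqr_ge0 // sqrtr_sqr.
Qed.

Lemma vnormN k (x : 'cV[R]_k) : vnorm (- x) = vnorm x.
Proof. by rewrite -scaleN1r vnormZ normrN1 mul1r. Qed.

Lemma vnorm0 k : vnorm (0 : 'cV[R]_k) = 0.
Proof. by rewrite vnormE dot0l sqrtr0. Qed.

Lemma vnorm_eq0 k (x : 'cV[R]_k) : vnorm x = 0 -> x = 0.
Proof.
rewrite vnormE => /eqP; rewrite sqrtr_eq0 => h.
have h0 : dot x x = 0 by apply/eqP; rewrite eq_le h dot_ge0.
apply/matrixP => i j; rewrite !mxE (ord1 j).
have H1 := psumr_eq0P (P := xpredT) (F := fun i => x i 0 * x i 0).
have hp : forall i0 : 'I_k, true -> 0 <= x i0 0 * x i0 0.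
  by move=> i0 _; rewrite -expr2 sqr_ge0.
have := H1 hp h0 i isT.
by move/eqP; rewrite mulf_eq0 orbb => /eqP ->.
Qed.

Lemma mx_bound p q (M : 'M[R]_(p, q)) (x : 'cV[R]_q) :
  vnorm (M *m x) <= Num.sqrt (\sum_i \sum_j M i j ^+ 2) * vnorm x.
Proof.
rewrite /vnorm -sqrtrM; last by apply: sumr_ge0 => i _; apply: sumr_ge0 => j _; apply: sqr_ge0.
rewrite ler_wsqrtr // mulr_suml; apply: ler_sum => i _.
rewrite mxE; exact: CS.
Qed.

Lemma opnorm_le p q (M : 'M[R]_(p, q)) (x : 'cV[R]_q) :
  vnorm (M *m x) <= opnorm M * vnorm x.
Proof.
have ub : has_ubound [set vnorm (M *m x) | x in [set x : 'cV[R]_q | vnorm x <= 1]].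
  exists (Num.sqrt (\sum_i \sum_j M i j ^+ 2)) => r [y /= hy <-].
  apply: le_trans (mx_bound M y) _.
  by rewrite ler_piMr // sqrtr_ge0.
have key := ub_le_sup ub.
have [x0|xn0] := eqVneq (vnorm x) 0.
  by move: (vnorm_eq0 x0) => ->; rewrite mulmx0 vnorm0 vnorm0 mulr0.
have xp : 0 < vnorm x by rewrite lt_neqAle eq_sym xn0 vnorm_ge0.
have : vnorm (M *m ((vnorm x)^-1 *: x)) <= opnorm M.
  apply: key; exists ((vnorm x)^-1 *: x) => //=.
  by rewrite vnormZ ger0_norm ?invr_ge0 ?vnorm_ge0 // mulVf // gt_eqF.
rewrite -scalemxAr vnormZ ger0_norm ?invr_ge0 ?vnorm_ge0 //.
move=> h; apply: le_trans (ler_wpM2r (ltW xp) h).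
by rewrite mulrAC mulVf ?mul1r.
Qed.

End Norms.

Section Traj.
Variable R : realType.

Lemma sum_if (c : R) (k t : nat) :
  \sum_(0 <= j < t) (if j == k then c else 0) = if (k < t)%N then c else 0.
Proof.
elim: t => [|t IH]; first by rewrite big_geq.
rewrite big_nat_recr //= IH.
case e1: (k < t)%N; case e2: (t == k); case e3: (k < t.+1)%N;
  rewrite ?addr0 ?add0r //; exfalso; move/eqP: e2 => e2 //; lia.
Qed.

Lemma dotmx k (x y : 'cV[R]_k) : dot x y = (x^T *m y) 0 0.
Proof. by rewrite mxE; apply: eq_bigr => i _; rewrite mxE. Qed.

Lemma qfE k (M : 'M[R]_k) (x : 'cV[R]_k) : qf M x = dot x (M *m x).
Proof. by rewrite /qf dotmx mulmxA. Qed.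

Lemma dot_sym k (Q : 'M[R]_k) (x w : 'cV[R]_k) : Q^T = Q ->
  dot x (Q *m w) = dot w (Q *m x).
Proof.
move=> hQ; rewrite (dotmx x) (dotmx w).
transitivity ((x^T *m (Q *m w))^T 0 0); first by rewrite [RHS]mxE.
by rewrite !trmx_mul !trmxK hQ mulmxA.
Qed.

Lemma qf_ge0 k (M : 'M[R]_k) (x : 'cV[R]_k) : sym_pd M -> 0 <= qf M x.
Proof.
move=> [_ h]; have [->|xn0] := eqVneq x 0.
  by rewrite qfE mulmx0 dot0r.
exact: ltW (h _ xn0).
Qed.

Lemma qf_shift k (Q : 'M[R]_k) (x w : 'cV[R]_k) c : Q^T = Q ->
  qf Q (x + c *: w) = qf Q x + 2 * c * dot x (Q *m w) + c ^+ 2 * qf Q w.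
Proof.
move=> hQ; rewrite !qfE mulmxDr -scalemxAr dotDl !dotDr !dotZl !dotZr.
rewrite (dot_sym w x hQ); ring.
Qed.

Lemma qfZ k (Q : 'M[R]_k) (x : 'cV[R]_k) c : qf Q (c *: x) = c ^+ 2 * qf Q x.
Proof. by rewrite !qfE -scalemxAr dotZl dotZr mulrA -expr2. Qed.

Lemma traj_lin d m (A : 'M[R]_d) (B : 'M[R]_(d, m)) x0 u u' v c :
  (forall t, u' t = u t + c *: v t) ->
  forall t, traj A B x0 u' t = traj A B x0 u t + c *: traj A B 0 v t.
Proof.
move=> hu; elim => [|t IH] /=; first by rewrite scaler0 addr0.
rewrite IH hu scalerDr !mulmxDr -!scalemxAr.
by rewrite -!addrA; congr (_ + _); rewrite addrCA.
Qed.

Lemma traj_bound d m (A : 'M[R]_d) (B : 'M[R]_(d, m)) x0 u (alpha beta : R) :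
  0 <= alpha -> opnorm A <= alpha -> opnorm B <= beta ->
  forall t, vnorm (traj A B x0 u t) <=
    alpha ^+ t * vnorm x0 + \sum_(0 <= j < t) alpha ^+ (t - 1 - j) * beta * vnorm (u j).
Proof.
move=> a0 hA hB; elim => [|t IH] /=; first by rewrite big_geq // expr0 mul1r addr0.
apply: le_trans (vnormD _ _) _.
have h1 : vnorm (A *m traj A B x0 u t) <= alpha * vnorm (traj A B x0 u t).
  apply: le_trans (opnorm_le _ _) _; apply: ler_wpM2r => //; exact: vnorm_ge0.
have h2 : vnorm (B *m u t) <= beta * vnorm (u t).
  apply: le_trans (opnorm_le _ _) _; apply: ler_wpM2r => //; exact: vnorm_ge0.
rewrite big_nat_recr //= subn1 /= subnn expr0 mul1r.
have -> : \sum_(0 <= j < t) alpha ^+ (t - j) * beta * vnorm (u j) =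
   alpha * \sum_(0 <= j < t) alpha ^+ (t - 1 - j) * beta * vnorm (u j).
  rewrite mulr_sumr; apply: eq_big_nat => j /andP [_ hj].
  rewrite !mulrA -exprS; congr (_ ^+ _ * _ * _); lia.
have := ler_wpM2l a0 IH.
rewrite exprS; nra.
Qed.

End Traj.

Section Obj.
Variable R : realType.

Lemma quad_nonpos (L M : R) : (forall s, 0 < s -> 2 * s * L - s ^+ 2 * M <= 0) -> L <= 0.
Proof.
move=> h; rewrite leNgt; apply/negP => Lp.
have h1 := h 1 ltr01.
have Mp : 0 < M by lra.
have := h (L / M) (divr_gt0 Lp Mp).
have -> : 2 * (L / M) * L - (L / M) ^+ 2 * M = L * L / M.
  by field; rewrite gt_eqF.
by rewrite leNgt divr_gt0 // mulr_gt0.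
Qed.

Lemma obj_e N d m (A : 'M[R]_d) (B : 'M[R]_(d, m)) x0 Q Rm (lam : nat -> R) u e e' k c :
  (k < N)%N -> (forall t, e' t = e t + (if t == k then c else 0)) ->
  agent_obj N A B x0 Q Rm lam u e' = agent_obj N A B x0 Q Rm lam u e + lam k * c.
Proof.
move=> kN he; rewrite /agent_obj -addrA; congr (_ + _).
have := sum_if (lam k * c) k N; rewrite kN => <-; rewrite -big_split /=.
apply: eq_bigr => t _; rewrite he mulrDr.
by case: eqP => [->|_]; rewrite ?mulr0 ?addr0 // addrA.
Qed.

Lemma obj_diff N d m (A : 'M[R]_d) (B : 'M[R]_(d, m)) x0 Q Rm (lam : nat -> R)
  u e k (s q : R) :
  Q^T = Q -> Rm^T = Rm ->
  let ek := fun t => if t == k then u k else 0 in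
  let w := traj A B 0 ek in
  let x := traj A B x0 u in
  agent_obj N A B x0 Q Rm lam (fun t => u t + (- s) *: ek t)
     (fun t => e t + (if t == k then (2 * s - s ^+ 2) * q else 0)) -
  agent_obj N A B x0 Q Rm lam u e =
  2 * s * (\sum_(0 <= t < N) (dot (x t) (Q *m w t) + dot (u t) (Rm *m ek t)
             + lam t * (if t == k then q else 0)) + dot (x N) (Q *m w N))
  - s ^+ 2 * (\sum_(0 <= t < N) (qf Q (w t) + qf Rm (ek t)
             + lam t * (if t == k then q else 0)) + qf Q (w N)).
Proof.
move=> hQ hR ek w x.
have hx := traj_lin A B x0 (u' := fun t => u t + (- s) *: ek t) (fun t => erefl).
rewrite /agent_obj /term_util /run_util hx qf_shift //.
have -> : forall a b c d : R, a + b - (c + d) = (a - c) + (b - d).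
  by move=> *; ring.
rewrite -sumrB.
rewrite (eq_bigr (fun t => 2 * s * (dot (x t) (Q *m w t) + dot (u t) (Rm *m ek t)
             + lam t * (if t == k then q else 0)) -
   s ^+ 2 * (qf Q (w t) + qf Rm (ek t) + lam t * (if t == k then q else 0)))); last first.
  move=> t _; rewrite hx !qf_shift //.
  by case: (t == k); rewrite /x /w; ring.
rewrite sumrB -!mulr_sumr /x /w; ring.
Qed.

End Obj.

Unset Implicit Arguments. Set Strict Implicit.

Theorem theorem2 (R : realType) (n N d m : nat)
  (A : 'I_n -> 'M[R]_d) (B : 'I_n -> 'M[R]_(d, m)) (x0 : 'I_n -> 'cV[R]_d)
  (H : 'I_n -> 'M[R]_m) (a : 'I_n -> nat -> R)
  (gamma alpha beta rho lamd deltamax : R) :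
  (0 < N)%N ->
  0 < gamma -> 0 < alpha -> 0 < beta -> 0 < rho ->
  (forall i, vnorm (x0 i) <= gamma) ->
  (forall i, opnorm (A i) <= alpha) ->
  (forall i, opnorm (B i) <= beta) ->
  (forall i, sym_pd (H i)) ->
  (forall i, psd_lb (H i) rho) ->
  (forall t, (t < N)%N -> 0 < \sum_(i < n) a i t) ->
  0 < lamd -> 0 < deltamax ->
  (forall k, (k < N)%N ->
     deltamax *
       \sum_(k.+1 <= t < N.+1)
         (gamma * alpha ^+ (2 * t - k - 1) +
          beta * \sum_(0 <= j < t | j != k)
                   Num.sqrt ((\sum_(i < n) a i j) / rho) *
                   alpha ^+ (2 * t - j - k - 2))
     <= Num.sqrt ((\sum_(i < n) a i k) * rho) / (n%:R * beta) * lamd) ->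
  forall (Q : 'I_n -> 'M[R]_d) (Rm : 'I_n -> 'M[R]_m),
    (forall i, sym_pd (Q i)) -> (forall i, sym_pd (Rm i)) ->
    (forall i, opnorm (Q i) <= deltamax) ->
  forall (lam : nat -> R) (U : 'I_n -> nat -> 'cV[R]_m) (E : 'I_n -> nat -> R),
    competitive_eq N A B x0 Q Rm H a lam U E ->
    forall t, (t < N)%N -> lam t <= lamd.
Proof.
move=> N0 g0 a0 b0 r0 hx0 hA hB hHpd hHlb hC l0 dl0 hcond Q Rm hQ hRm hQn
  lam U E [hopt hclr] k kN.
have [lk0|lkp] := lerP (lam k) 0; first exact: (le_trans lk0 (ltW l0)).
pose C := fun j => \sum_(i < n) a i j.
have Eeq : forall i, E i k = a i k - qf (H i) (U i k).
  move=> i; have [hf hop] := hopt i.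
  apply/eqP; rewrite eq_le (hf k kN) /= leNgt; apply/negP => hlt.
  pose c := a i k - qf (H i) (U i k) - E i k.
  have cp : 0 < c by rewrite /c subr_gt0.
  have hfe : feasible N (H i) (a i) (U i) (fun t => E i t + (if t == k then c else 0)).
    move=> t tN /=; case: eqP => [->|_]; first by rewrite /c; lra.
    by rewrite addr0; apply: hf.
  have := hop _ _ hfe.
  rewrite (obj_e (A i) (B i) (x0 i) (Q i) (Rm i) lam (U i) (e := E i) kN (fun t => erefl)).
  have : 0 < lam k * c by apply: mulr_gt0.
  lra.
have sumq : \sum_i qf (H i) (U i k) = C k.
  have := hclr k kN.
  rewrite (eq_bigr (fun i => a i k - qf (H i) (U i k))); last by move=> i _; rewrite Eeq.
  by rewrite sumrB => /eqP; rewrite subr_eq0 => /eqP <-.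
have qle : forall i j, (j < N)%N -> qf (H i) (U i j) <= C j.
  move=> i j jN.
  have hs : \sum_i0 qf (H i0) (U i0 j) <= C j.
    have : \sum_i0 qf (H i0) (U i0 j) <= \sum_i0 (a i0 j - E i0 j).
      apply: ler_sum => i0 _; have [hf _] := hopt i0; have := hf j jN; lra.
    by rewrite sumrB (hclr j jN) subr0.
  apply: le_trans hs; rewrite (bigD1 i) //= lerDl.
  by apply: sumr_ge0 => i0 _; apply: qf_ge0.
have unorm : forall i j, (j < N)%N -> vnorm (U i j) <= Num.sqrt (C j / rho).
  move=> i j jN; rewrite vnormE ler_wsqrtr // ler_pdivlMr //.
  have := hHlb i (U i j); rewrite qfE mul1mx => h1.
  have := qle i j jN; lra.
have n0 : (0 < n)%N.
  rewrite lt0n; apply/negP => /eqP n0.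
  have hn : forall i : 'I_n, False by case=> i hi; rewrite n0 in hi.
  have := hC k kN; rewrite big1; first by rewrite ltxx.
  by move=> i; case: (hn i).
have Ckp : 0 < C k := hC k kN.
have [i hi] : exists i, C k / n%:R <= qf (H i) (U i k).
  apply/not_existsP => hall.
  have hlt : \sum_(i0 < n) qf (H i0) (U i0 k) < \sum_(i0 < n) (C k / n%:R).
    apply: ltr_sum.
      by apply/hasP; exists (Ordinal n0) => //; rewrite mem_index_enum.
    by move=> i0 _; rewrite ltNge; apply/negP => h; apply: (hall i0).
  move: hlt; rewrite sumq sumr_const card_ord -(mulr_natr (C k / n%:R) n) divfK ?ltxx //.
  by rewrite pnatr_eq0 -lt0n.
pose ek := fun t => if t == k then U i k else 0.
pose w := traj (A i) (B i) 0 ek.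
pose x := traj (A i) (B i) (x0 i) (U i).
pose q := qf (H i) (U i k).
have Lle : \sum_(0 <= t < N) (dot (x t) (Q i *m w t) + dot (U i t) (Rm i *m ek t)
             + lam t * (if t == k then q else 0)) + dot (x N) (Q i *m w N) <= 0.
  apply: (@quad_nonpos _ _ (\sum_(0 <= t < N) (qf (Q i) (w t) + qf (Rm i) (ek t)
             + lam t * (if t == k then q else 0)) + qf (Q i) (w N))) => s sp.
  have hd := obj_diff N (A i) (B i) (x0 i) lam (U i) (E i) k s q
     (proj1 (hQ i)) (proj1 (hRm i)).
  cbv zeta beta in hd.
  have hf : feasible N (H i) (a i) (fun t => U i t + (- s) *: (if t == k then U i k else 0))
     (fun t => E i t + (if t == k then (2 * s - s ^+ 2) * q else 0)).
    move=> t tN /=; case: eqP => [->|_].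
      rewrite -{1}(scale1r (U i k)) -scalerDl qfZ Eeq -/q le_eqVlt; apply/orP; left.
      by apply/eqP; ring.
    by rewrite scaler0 !addr0; have [hf _] := hopt i; apply: hf.
  have := (proj2 (hopt i)) _ _ hf.
  rewrite -subr_le0 hd; exact.
have step6 : lam k * q <= \sum_(0 <= t < N.+1) - dot (x t) (Q i *m w t).
  have hP : 0 <= \sum_(0 <= t < N) dot (U i t) (Rm i *m ek t).
    apply: sumr_ge0 => t _; rewrite /ek; case: eqP => [->|_].
      by rewrite -qfE; apply: qf_ge0.
    by rewrite mulmx0 dot0r.
  have hI : \sum_(0 <= t < N) lam t * (if t == k then q else 0) = lam k * q.
    rewrite (eq_bigr (fun t => if t == k then lam k * q else 0)); first by rewrite sum_if kN.
    by move=> t _; case: eqP => [->|_]; rewrite ?mulr0.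
  move: Lle; rewrite !big_split /= hI => Lle.
  rewrite big_nat_recr //= sumrN; lra.
pose u0 := fun t => if t == k then 0 else U i t.
pose y := traj (A i) (B i) (x0 i) u0.
have hu : forall t, U i t = u0 t + 1 *: ek t.
  by move=> t; rewrite scale1r /u0 /ek; case: eqP => [->|_]; rewrite ?add0r ?addr0.
have hxy : forall t, x t = y t + 1 *: w t := traj_lin (A i) (B i) (x0 i) hu.
have step7 : forall t, - dot (x t) (Q i *m w t) <= vnorm (y t) * deltamax * vnorm (w t).
  move=> t; rewrite hxy scale1r dotDl -qfE.
  have h0 := qf_ge0 (w t) (hQ i).
  have h1 : - dot (y t) (Q i *m w t) <= `|dot (y t) (Q i *m w t)|.
    by rewrite -normrN ler_norm.
  have h2 := dot_CS (y t) (Q i *m w t).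
  have h3 : vnorm (Q i *m w t) <= deltamax * vnorm (w t).
    apply: le_trans (opnorm_le _ _) _; apply: ler_wpM2r; [exact: vnorm_ge0|exact: hQn].
  have h4 : vnorm (y t) * vnorm (Q i *m w t) <= vnorm (y t) * (deltamax * vnorm (w t)).
    by apply: ler_wpM2l => //; exact: vnorm_ge0.
  rewrite -mulrA; lra.
have ab0 : forall e : nat, 0 <= alpha ^+ e * beta.
  by move=> e; apply: mulr_ge0; [apply: exprn_ge0; exact: ltW|exact: ltW].
have hw_small : forall t, (t <= k)%N -> vnorm (w t) <= 0.
  move=> t tk; have := traj_bound 0 ek (ltW a0) (hA i) (hB i) t.
  rewrite vnorm0 mulr0 add0r.
  have -> : \sum_(0 <= j < t) alpha ^+ (t - 1 - j) * beta * vnorm (ek j) = 0.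
    rewrite big_nat_cond big1 // => j /andP [/andP [_ hj] _].
    rewrite /ek (_ : (j == k) = false) ?vnorm0 ?mulr0 //; apply/eqP; clear -hj tk; lia.
  by [].
have hw : forall t, (k < t)%N ->
    vnorm (w t) <= alpha ^+ (t - 1 - k) * beta * Num.sqrt (C k / rho).
  move=> t kt; have := traj_bound 0 ek (ltW a0) (hA i) (hB i) t.
  rewrite vnorm0 mulr0 add0r.
  have -> : \sum_(0 <= j < t) alpha ^+ (t - 1 - j) * beta * vnorm (ek j) =
      \sum_(0 <= j < t) (if j == k then alpha ^+ (t - 1 - k) * beta * vnorm (U i k) else 0).
    by apply: eq_big_nat => j _; rewrite /ek; case: eqP => [->|_]; rewrite ?vnorm0 ?mulr0.
  rewrite sum_if kt => h; apply: le_trans h _.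
  by apply: ler_wpM2l => //; apply: unorm.
have hy : forall t, (t <= N)%N -> vnorm (y t) <= alpha ^+ t * gamma +
    \sum_(0 <= j < t | j != k) alpha ^+ (t - 1 - j) * beta * Num.sqrt (C j / rho).
  move=> t tN; have := traj_bound (x0 i) u0 (ltW a0) (hA i) (hB i) t.
  move=> h; apply: le_trans h _; apply: lerD.
    by apply: ler_wpM2l; [apply: exprn_ge0; exact: ltW|exact: hx0].
  rewrite [X in _ <= X]big_mkcond [X in X <= _]big_nat_cond [X in _ <= X]big_nat_cond.
  apply: ler_sum => j /andP [/andP [_ hj] _].
  rewrite /u0; case: (j =P k) => [->|hne]; first by rewrite /= vnorm0 mulr0.
  rewrite /=.
  by apply: ler_wpM2l => //; apply: unorm; clear -hj tN; lia.
pose sk := Num.sqrt (C k / rho).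
have sk0 : 0 <= sk by apply: sqrtr_ge0.
have pert : forall t, (k < t)%N -> (t <= N)%N ->
  vnorm (y t) * deltamax * vnorm (w t) <= deltamax * beta * sk *
    (gamma * alpha ^+ (2 * t - k - 1) +
     beta * \sum_(0 <= j < t | j != k) Num.sqrt (C j / rho) * alpha ^+ (2 * t - j - k - 2)).
  move=> t kt tN.
  have hy1 := hy t tN; have hw1 := hw t kt.
  have hyg := vnorm_ge0 (y t); have hwg := vnorm_ge0 (w t).
  apply: le_trans (_ : (alpha ^+ t * gamma + \sum_(0 <= j < t | j != k)
      alpha ^+ (t - 1 - j) * beta * Num.sqrt (C j / rho)) * deltamax *
      (alpha ^+ (t - 1 - k) * beta * sk) <= _).
    apply: ler_pM => //; first by apply: mulr_ge0 => //; exact: ltW.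
    by apply: ler_wpM2r => //; exact: ltW.
  have e1 : alpha ^+ t * alpha ^+ (t - 1 - k) = alpha ^+ (2 * t - k - 1).
    by rewrite -exprD; congr (_ ^+ _); clear -kt; lia.
  have e2 : (\sum_(0 <= j < t | j != k) alpha ^+ (t - 1 - j) * beta * Num.sqrt (C j / rho))
       * alpha ^+ (t - 1 - k) =
     beta * \sum_(0 <= j < t | j != k) Num.sqrt (C j / rho) * alpha ^+ (2 * t - j - k - 2).
    rewrite mulr_suml mulr_sumr big_mkcond [RHS]big_mkcond.
    apply: eq_big_nat => j /andP [_ hj].
    case: (j != k); last by [].
    have ee : alpha ^+ (t - 1 - j) * alpha ^+ (t - 1 - k) = alpha ^+ (2 * t - j - k - 2).
      by rewrite -exprD; congr (_ ^+ _); clear -hj kt; lia.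
    rewrite -ee; move: (alpha ^+ (t - 1 - j)) (alpha ^+ (t - 1 - k)) (Num.sqrt (C j / rho)) => p1 p2 p3; ring.
  rewrite le_eqVlt; apply/orP; left; apply/eqP; rewrite -e1 -e2; move: (alpha ^+ t) (alpha ^+ (t - 1 - k)) (\sum_(0 <= j < t | j != k) alpha ^+ (t - 1 - j) * beta * Num.sqrt (C j / rho)) => p1 p2 p3; ring.
have hc := hcond k kN.
pose T := fun t => gamma * alpha ^+ (2 * t - k - 1) +
     beta * \sum_(0 <= j < t | j != k) Num.sqrt (C j / rho) * alpha ^+ (2 * t - j - k - 2).
have hsum : lam k * q <= beta * sk * (deltamax * \sum_(k.+1 <= t < N.+1) T t).
  apply: le_trans step6 _.
  apply: le_trans (_ : \sum_(0 <= t < N.+1) vnorm (y t) * deltamax * vnorm (w t) <= _).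
    by apply: ler_sum => t _; apply: step7.
  rewrite (big_cat_nat (n := k.+1)) //=; last by clear -kN; lia.
  have h1 : \sum_(0 <= t < k.+1) vnorm (y t) * deltamax * vnorm (w t) <= 0.
    rewrite big_nat_cond; apply: sumr_le0 => t /andP [/andP [_ ht] _].
    apply: mulr_ge0_le0; last by apply: hw_small.
    by apply: mulr_ge0; [exact: vnorm_ge0|exact: ltW].
  have h2 : \sum_(k.+1 <= t < N.+1) vnorm (y t) * deltamax * vnorm (w t) <=
            \sum_(k.+1 <= t < N.+1) (deltamax * beta * sk * T t).
    rewrite big_nat_cond [X in _ <= X]big_nat_cond.
    apply: ler_sum => t /andP [/andP [h3 h4] _]; apply: pert; clear -h3 h4; lia.
  have h3 : \sum_(k.+1 <= t < N.+1) (deltamax * beta * sk * T t) =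
     beta * sk * (deltamax * \sum_(k.+1 <= t < N.+1) T t).
    rewrite -mulr_sumr; move: (\sum_(k.+1 <= t < N.+1) T t) => p; ring.
  lra.
have hfin : lam k * q <= beta * sk * (Num.sqrt (C k * rho) / (n%:R * beta) * lamd).
  apply: le_trans hsum _; apply: ler_wpM2l; first by apply: mulr_ge0 => //; exact: ltW.
  exact: hc.
have hsk : sk * Num.sqrt (C k * rho) = C k.
  rewrite /sk -sqrtrM; last by apply: divr_ge0; exact: ltW.
  have -> : C k / rho * (C k * rho) = C k ^+ 2 by field; rewrite gt_eqF.
  by rewrite sqrtr_sqr ger0_norm // ltW.
have np : 0 < n%:R :> R by rewrite ltr0n.
have hR : beta * sk * (Num.sqrt (C k * rho) / (n%:R * beta) * lamd) = C k / n%:R * lamd.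
  have gen : forall (s0 r c nn b l : R), s0 * r = c -> nn != 0 -> b != 0 ->
      b * s0 * (r / (nn * b) * l) = c / nn * l.
    by move=> s0 r c nn b l <- hn hb; field; apply/andP.
  by apply: gen hsk _ _; rewrite gt_eqF.
have hq := ler_wpM2l (ltW lkp) hi.
have cn : 0 < C k / n%:R by apply: divr_gt0.
rewrite -(ler_pM2l cn) mulrC; rewrite -/q in hq; lra.
Qed.
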